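(* Let $\langle B,\wedge,{}'\rangle$ be an algebra with $\wedge$ binary and ${}'$ unary satisfying $(x\wedge y)\wedge z\approx (y\wedge z)\wedge x$ and $x\approx (x'\wedge y)'\wedge(x'\wedge y')'$. Then $x\wedge(y\wedge z)=z\wedge(y\wedge x)$ for all $x,y,z\in B$. *)


Theorem lemma9p8 (B : Type) (meet : B -> B -> B) (c : B -> B)
  (H1 : forall x y z : B, meet (meet x y) z = meet (meet y z) x)
  (H2 : forall x y : B, x = meet (c (meet (c x) y)) (c (meet (c x) (c y)))) :
  forall x y z : B, meet x (meet y z) = meet z (meet y x).
Proof.
  assert (key : forall x1 x2 y z1 z2,
    meet (meet x1 x2) (meet y (meet z1 z2)) = meet (meet z1 z2) (meet y (meet x1 x2))).
  { intros x1 x2 y z1 z2. exact (eq_trans (eq_trans (eq_trans (eq_trans (eq_trans (eq_trans (eq_trans (eq_trans (eq_sym (H1 (meet y (meet z1 z2)) x1 x2)) (f_equal (fun h => meet h x2) (H1 y (meet z1 z2) x1))) (f_equal (fun h => meet h x2) (f_equal (fun h => meet h y) (H1 z1 z2 x1)))) (f_equal (fun h => meet h x2) (H1 (meet z2 x1) z1 y))) (H1 (meet z1 y) (meet z2 x1) x2)) (f_equal (fun h => meet h (meet z1 y)) (H1 z2 x1 x2))) (eq_sym (H1 (meet z1 y) (meet x1 x2) z2))) (f_equal (fun h => meet h z2) (H1 z1 y (meet x1 x2)))) (H1 (meet y (meet x1 x2)) z1 z2)). }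
  intros x y z.
  rewrite (H2 x x), (H2 z z).
  apply key.
Qed.
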